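(* Let $\hat P=\mathrm{Spec}(B)\not\simeq S\times\mathbb{G}_a$ be an affine extension of the trivial bundle $S_*\times\mathbb{G}_a$ to which the vertical $\mathbb{G}_m$-action extends. Then $B=\mathcal O(S)\oplus\bigoplus_{\nu\ge1}\mathfrak m_\nu t^\nu\subset\mathcal O(S)[t]$ for a decreasing sequence $(\mathfrak m_\nu)_{\nu\ge1}$ of $\mathfrak m_{\mathbf x}$-primary ideals of $\mathcal O(S)$. Consequently (Corollary) $\hat P$ is of the second kind.
   Context: All varieties are over $\mathbb{C}$. $S$ is a normal affine surface, $\mathbf{x}\in S$ a closed regular point with maximal ideal $\mathfrak m_{\mathbf x}\subset\mathcal O(S)$, $S_*=S\setminus\{\mathbf{x}\}$. An affine extension of a principal $\mathbb{G}_a$-bundle $\pi\colon P\to S_*$ is a normal affine $\mathbb{G}_a$-variety $\hat P=\mathrm{Spec}(B)$ with a morphism $\hat\pi\colon\hat P\to S$ and a $\mathbb{G}_a$-equivariant dominant open embedding $\iota\colon P\hookrightarrow\hat P$ with $\iota(P)=\hat\pi^{-1}(S_* )$ and $\hat\pi\circ\iota=\pi$; $B\subset\mathcal O(P)$ via $\iota^*$. For $P=S_*\times\mathbb{G}_a$ (translation action), $\mathcal O(P)=\mathcal O(S)[t]$; the vertical $\mathbb{G}_m$-action is $\lambda\cdot(s,t)=(s,\lambda t)$. The extension is of the second kind if the morphism $j\colon S\times\mathbb G_a\to\hat P$ with $j^*=\iota^*$ maps $\{\mathbf x\}\times\mathbb G_a$ to a point. *)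

(* Defs.v *)
From HB Require Import structures.
From mathcomp Require Import all_boot all_order all_algebra.
From mathcomp Require Import fraction.
From mathcomp Require Import complex.
From mathcomp Require Import reals.
Set Implicit Arguments.
Unset Strict Implicit.
Unset Printing Implicit Defensive.
Import Order.TTheory GRing.Theory Num.Theory.
Local Open Scope ring_scope.

(* The base field: C := R[i] for a complete archimedean real field R,
   i.e. (a copy of) the complex numbers. *)

Section CommAlg.
Variable T : comNzRingType.

Definition is_ideal (I : T -> Prop) : Prop :=
  I 0 /\ (forall x y, I x -> I y -> I (x + y)) /\ (forall a x, I x -> I (a * x)).

Definition is_prime (P : T -> Prop) : Prop :=
  is_ideal P /\ ~ P 1 /\ (forall x y, P (x * y) -> P x \/ P y).

Definition is_maximal (M : T -> Prop) : Prop :=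
  is_ideal M /\ ~ M 1 /\
  (forall J : T -> Prop, is_ideal J -> ~ J 1 -> (forall x, M x -> J x) ->
     forall x, J x -> M x).

Definition is_primary_to (M Q : T -> Prop) : Prop :=
  is_ideal Q /\ ~ Q 1 /\
  (forall x y, Q (x * y) -> Q x \/ exists n, Q (y ^+ n)) /\
  (forall a, M a <-> exists n, Q (a ^+ n)).

Definition strict_incl (P Q : T -> Prop) : Prop :=
  (forall x, P x -> Q x) /\ exists x, Q x /\ ~ P x.

Definition prime_chain (n : nat) (c : nat -> T -> Prop) : Prop :=
  (forall i, (i <= n)%N -> is_prime (c i)) /\
  (forall i, (i < n)%N -> strict_incl (c i) (c i.+1)).

Definition krull_dim (d : nat) : Prop :=
  (exists c, prime_chain d c) /\ (forall n c, prime_chain n c -> (n <= d)%N).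

Definition height (P : T -> Prop) (d : nat) : Prop :=
  (exists c, prime_chain d c /\ forall x, c d x <-> P x) /\
  (forall n c, prime_chain n c -> (forall x, c n x <-> P x) -> (n <= d)%N).

(* the local ring T_M is a regular local ring: its maximal ideal M T_M is
   generated by (height M) elements *)
Definition regular_at (M : T -> Prop) : Prop :=
  is_maximal M /\
  exists d, height M d /\
  exists us : seq T, size us = d /\ (forall u, u \in us -> M u) /\
    forall a, M a -> exists s (cs : seq T), ~ M s /\ size cs = d /\
      s * a = \sum_(i < d) cs`_i * us`_i.

Definition is_subring (B : T -> Prop) : Prop :=
  B 1 /\ (forall x y, B x -> B y -> B (x - y)) /\
  (forall x y, B x -> B y -> B (x * y)).

End CommAlg.

Inductive alg_gen (K : nzRingType) (T : nzRingType) (f : K -> T) (s : seq T) :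
    T -> Prop :=
  | ag_const c : alg_gen f s (f c)
  | ag_elt x : x \in s -> alg_gen f s x
  | ag_add x y : alg_gen f s x -> alg_gen f s y -> alg_gen f s (x + y)
  | ag_opp x : alg_gen f s x -> alg_gen f s (- x)
  | ag_mul x y : alg_gen f s x -> alg_gen f s y -> alg_gen f s (x * y).

(* the subset B (assumed a subalgebra) is a finitely generated K-algebra *)
Definition fin_gen (K T : nzRingType) (f : K -> T) (B : T -> Prop) : Prop :=
  exists s : seq T, (forall x, x \in s -> B x) /\ forall x, B x -> alg_gen f s x.

Definition normal_domain (A : idomainType) : Prop :=
  forall z : {fraction A},
    (exists p : {poly A}, p \is monic /\ root (map_poly (@FracField.tofrac _) p) z) ->
    exists a : A, z = FracField.tofrac a.

(* a subring B of A[t] is normal: every element of Frac(A[t]) (= Frac(B) in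
   our situation) integral over B lies in B *)
Definition normal_subring (A : idomainType) (B : {poly A} -> Prop) : Prop :=
  forall z : {fraction {poly A}},
    (exists p : {poly {poly A}}, p \is monic /\ (forall i, B p`_i) /\
        root (map_poly (@FracField.tofrac _) p) z) ->
    exists b, B b /\ z = FracField.tofrac b.

(** O(S) = A (a C-algebra via iota), x <-> maximal ideal m,
   O(S_star x G_a) = O(S)[t] = {poly A} (Hartogs, S normal),
   hat P = Spec B with B a subring of {poly A}. *)

Definition normal_affine_surface_with_point (R : realType) (A : idomainType)
    (iota : {rmorphism R[i] -> A}) (m : A -> Prop) : Prop :=
  fin_gen iota (fun _ => True) /\ normal_domain A /\ krull_dim A 2 /\
  regular_at m.

Definition affine_extension (R : realType) (A : idomainType)
    (iota : {rmorphism R[i] -> A}) (m : A -> Prop) (B : {poly A} -> Prop) : Prop :=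
  (* B is a C-subalgebra of O(P)=A[t] containing A (the morphism hat pi) *)
  is_subring B /\ (forall a : A, B a%:P) /\
  (* hat P is an affine variety: B finitely generated over C *)
  fin_gen (fun c => (iota c)%:P) B /\
  normal_subring B /\
  (* G_a-stable: B is invariant under the translations t |-> t + c *)
  (forall c : R[i], forall p, B p -> B (p \Po ('X + (iota c)%:P))) /\
  (* iota is an open embedding onto hat pi^{-1}(S_star) : B_f = A_f[t] for all
     f in m (the D(f), f in m, cover S_star) *)
  (forall f, m f -> forall p : {poly A}, exists n, B ((f ^+ n)%:P * p)).

(* the vertical G_m-action lambda.(s,t) = (s, lambda t) extends to hat P *)
Definition vertical_Gm_extends (R : realType) (A : idomainType)
    (iota : {rmorphism R[i] -> A}) (B : {poly A} -> Prop) : Prop :=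
  forall c : R[i], c != 0 -> forall p, B p -> B (p \Po ((iota c)%:P * 'X)).

(* second kind: j : S x G_a -> hat P contracts {x} x G_a to a point, i.e.
   every b in B restricted to {x} x G_a is constant in t, i.e. all the
   coefficients of t^nu (nu >= 1) of b lie in m *)
Definition second_kind (A : idomainType) (m : A -> Prop) (B : {poly A} -> Prop)
  : Prop :=
  forall b, B b -> forall nu, (0 < nu)%N -> m b`_nu.

(* Main.v *)
Require Import Defs.
From HB Require Import structures.
From mathcomp Require Import all_boot all_order all_algebra.
From mathcomp Require Import fraction complex reals.
From Stdlib Require Import Classical.
From mathcomp Require Import ring.
Import Order.TTheory GRing.Theory Num.Theory.
Set Implicit Arguments.
Unset Strict Implicit.
Local Open Scope ring_scope.

Lemma sub_closure (A : idomainType) (B : {poly A} -> Prop) :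
  is_subring B -> (forall a : A, B a%:P) ->
  B 0 /\ (forall x, B x -> B (- x)) /\ (forall x y, B x -> B y -> B (x + y)).
Proof.
move=> [B1 [BB BM]] BC.
have B0 : B 0 by rewrite -(subrr 1); apply: BB.
have BN : forall x, B x -> B (- x) by move=> x Bx; rewrite -sub0r; apply: BB.
split=> //; split=> // x y Bx By; rewrite -(opprK y); apply: BB => //; exact: BN.
Qed.

Lemma coef_scale (A : idomainType) (c : A) (p : {poly A}) n :
  (p \Po (c%:P * 'X))`_n = c ^+ n * p`_n.
Proof.
elim/poly_ind: p n => [|q a IH] n; first by rewrite comp_poly0 !coef0 mulr0.
rewrite comp_poly_MXaddC !coefD !coefC mulrA [_ * c%:P]mulrC -mulrA coefCM coefMX.
rewrite coefMX; case: n => [|n] /=; first by rewrite mulr0 expr0 mul1r.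
by rewrite IH !addr0 mulrA -exprS.
Qed.

Lemma coef_X1 (A : idomainType) n k : ((('X + 1) ^+ n : {poly A}))`_k = ('C(n, k))%:R.
Proof.
elim: n k => [|n IH] k; first by rewrite expr0 coef1 bin0n; case: k.
rewrite exprSr mulrDr mulr1 coefD coefMX; case: k => [|k] /=.
  by rewrite add0r IH !bin0.
by rewrite !IH binS natrD addrC.
Qed.

Definition Tk (R : realType) (A : idomainType) (io : {rmorphism R[i] -> A})
  (k : nat) (q : {poly A}) : {poly A} :=
  q \Po ((io 2)%:P * 'X) - (io (2 ^+ k))%:P * q.

Definition Gk (R : realType) (A : idomainType) (io : {rmorphism R[i] -> A})
  (ks : seq nat) (q : {poly A}) : {poly A} := foldr (Tk io) q ks.

Lemma coef_Gk (R : realType) (A : idomainType) (io : {rmorphism R[i] -> A})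
  ks q i : (Gk io ks q)`_i = q`_i * io (\prod_(k <- ks) (2 ^+ i - 2 ^+ k)).
Proof.
elim: ks => [|k ks IH] /=; first by rewrite big_nil rmorph1 mulr1.
rewrite /Tk coefB coef_scale coefCM IH big_cons rmorphM rmorphB !rmorphXn.
by ring.
Qed.

Lemma B_Gk (R : realType) (A : idomainType) (io : {rmorphism R[i] -> A})
  (B : {poly A} -> Prop) :
  is_subring B -> (forall a : A, B a%:P) -> vertical_Gm_extends io B ->
  forall ks q, B q -> B (Gk io ks q).
Proof.
move=> hB hC hG; elim=> [|k ks IH] q Bq //=.
rewrite /Tk; case: (hB) => _ [BB BM]; apply: BB.
  by apply: hG; [rewrite pnatr_eq0 | exact: IH].
by apply: BM; [exact: hC | exact: IH].
Qed.

Lemma two_pow_neq (R : realType) (i k : nat) : i != k ->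
  (2 : R[i]) ^+ i - 2 ^+ k != 0.
Proof.
move=> ik; rewrite subr_eq0 -!natrX eqr_nat eqn_exp2l //.
Qed.

Lemma homog (R : realType) (A : idomainType) (io : {rmorphism R[i] -> A})
  (B : {poly A} -> Prop) :
  is_subring B -> (forall a : A, B a%:P) -> vertical_Gm_extends io B ->
  forall q, B q -> forall nu, B ((q`_nu)%:P * 'X^nu).
Proof.
move=> hB hC hG q Bq nu.
set ks := [seq k <- iota 0 (size q) | k != nu].
set D : R[i] := \prod_(k <- ks) (2 ^+ nu - 2 ^+ k).
have D0 : D != 0.
  rewrite prodf_seq_neq0; apply/allP => k; rewrite mem_filter => /andP[kn _].
  by rewrite /= two_pow_neq // eq_sym.
have E : Gk io ks q = (q`_nu * io D)%:P * 'X^nu.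
  apply/polyP => i; rewrite coef_Gk coefCM coefXn.
  have [->|inu] := eqVneq i nu; first by rewrite mulr1.
  rewrite mulr0; have [lt|ge] := ltnP i (size q).
    rewrite (big_rem i) /=; first by rewrite subrr mul0r rmorph0 mulr0.
    by rewrite mem_filter inu mem_iota.
  by rewrite nth_default // mul0r.
have := B_Gk hB hC hG ks Bq; rewrite E => H.
case: hB => _ [_ BM].
have := BM _ _ (hC (io D^-1)) H.
by rewrite mulrA -polyCM mulrCA -rmorphM mulVf // rmorph1 mulr1.
Qed.

Lemma decr (R : realType) (A : idomainType) (io : {rmorphism R[i] -> A})
  (B : {poly A} -> Prop) :
  is_subring B -> (forall a : A, B a%:P) -> vertical_Gm_extends io B ->
  (forall c : R[i], forall p, B p -> B (p \Po ('X + (io c)%:P))) ->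
  forall nu a, B (a%:P * 'X^(nu.+1)) -> B (a%:P * 'X^nu).
Proof.
move=> hB hC hG hT nu a Ba.
have := homog hB hC hG (hT 1 _ Ba) nu.
rewrite rmorph1 comp_polyM comp_polyC comp_Xn_poly coefCM coef_X1 binSn => H.
case: hB => _ [_ BM].
have := BM _ _ (hC (io (nu.+1%:R)^-1)) H.
rewrite mulrA -polyCM mulrCA -(rmorph_nat io) -rmorphM mulVf ?rmorph1 ?mulr1 //.
by rewrite pnatr_eq0.
Qed.

Lemma recon (A : idomainType) (B : {poly A} -> Prop) :
  is_subring B -> (forall a : A, B a%:P) ->
  forall p : {poly A}, (forall nu, (0 < nu)%N -> B ((p`_nu)%:P * 'X^nu)) -> B p.
Proof.
move=> hB hC p H.
have [B0 [BN BD]] := sub_closure hB hC.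
rewrite -[p]coefK poly_def.
apply: (big_ind B) => //.
move=> [[|i] ?] _ /=; first by rewrite expr0 -mul_polyC mulr1.
by rewrite -mul_polyC; apply: H.
Qed.

Lemma one_sub_pow (T : comNzRingType) (z : T) n : exists g, (1 - z) ^+ n = 1 - z * g.
Proof.
elim: n => [|n [g IH]]; first by exists 0; rewrite expr0 mulr0 subr0.
exists (g + 1 - z * g); rewrite exprS IH; ring.
Qed.

Lemma pow_one (T : comNzRingType) (Q : T -> Prop) : is_ideal Q ->
  forall x, Q (1 - x) -> forall n, Q (1 - x ^+ n).
Proof.
move=> [Q0 [QD QM]] x Qx; elim=> [|n IH]; first by rewrite expr0 subrr.
have -> : 1 - x ^+ n.+1 = (1 - x ^+ n) + x ^+ n * (1 - x) by rewrite exprS; ring.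
by apply: QD => //; apply: QM.
Qed.

Lemma unit_mod (T : comNzRingType) (m Q : T -> Prop) : is_maximal m -> is_ideal Q ->
  (forall f, m f -> exists n, Q (f ^+ n)) ->
  forall y, ~ m y -> exists c, Q (1 - y * c).
Proof.
move=> [[m0 [mD mM]] [_ mmax]] hQ hmQ y ny.
pose J := fun x => exists f b, m f /\ x = f + y * b.
have hJ : is_ideal J.
  split; first by exists 0, 0; split => //; rewrite mulr0 addr0.
  split.
    move=> x1 x2 [f1 [b1 [m1 ->]]] [f2 [b2 [m2 ->]]].
    by exists (f1 + f2), (b1 + b2); split; [apply: mD | ring].
  move=> a x [f [b [mf ->]]]; exists (a * f), (a * b); split; [exact: mM | ring].
have J1 : J 1.
  apply: NNPP => nJ1.
  have mJ : forall x, m x -> J x by move=> x mx; exists x, 0; split => //; rewrite mulr0 addr0.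
  apply: ny; apply: (mmax J hJ nJ1 mJ); exists 0, 1; split => //; by rewrite mulr1 add0r.
case: J1 => f [b [mf E]].
have [n Qn] := hmQ f mf.
have [g Eg] := one_sub_pow (y * b) n.
exists (b * g); have Ef : f = 1 - y * b by rewrite E addrK.
by rewrite mulrA -Eg -Ef.
Qed.
Unset Implicit Arguments.
Set Strict Implicit.
Theorem mainTheorem4 (R : realType) (A : idomainType)
    (iota : {rmorphism R[i] -> A}) (m : A -> Prop) (B : {poly A} -> Prop) :
  normal_affine_surface_with_point iota m ->
  affine_extension iota m B ->
  (* hat P is not the trivial extension S x G_a, i.e. B <> A[t] *)
  (exists p : {poly A}, ~ B p) ->
  vertical_Gm_extends iota B ->
  (exists M : nat -> A -> Prop,
      (forall nu, (0 < nu)%N -> is_primary_to m (M nu)) /\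
      (forall nu, (0 < nu)%N -> forall a, M nu.+1 a -> M nu a) /\
      (forall p : {poly A}, B p <-> forall nu, (0 < nu)%N -> M nu p`_nu))
  /\ second_kind m B.
Proof.
move=> [_ [_ [_ [hm _]]]] [hB [hC [_ [_ [hT hE]]]]] [p0 np0] hG.
have [B0 [BN BD]] := sub_closure hB hC.
have [B1 [_ BM]] := hB.
have [[m0 _] _] := hm.
pose M := fun nu (a : A) => B (a%:P * 'X^nu).
have Mid : forall nu, is_ideal (M nu).
  move=> nu; split; first by rewrite /M polyC0 mul0r.
  split; first by move=> x y Mx My; rewrite /M polyCD mulrDl; apply: BD.
  by move=> a x Mx; rewrite /M polyCM -mulrA; apply: BM.
have Mdec : forall k j a, M (j + k)%N a -> M j a.
  elim=> [|k IH] j a; first by rewrite addn0.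
  by move=> H; apply: IH; apply: (decr hB hC hG hT); rewrite -addnS.
have Mn1 : forall nu, (0 < nu)%N -> ~ M nu 1.
  move=> [//|nu] _ H1; apply: np0.
  have BX : B 'X by have := Mdec nu 1%N 1 H1; rewrite /M mul1r expr1.
  have BXn : forall n, B ('X^n).
    by elim=> [|n IH]; [rewrite expr0 | rewrite exprS; apply: BM].
  by apply: (recon hB hC) => nu' _; apply: BM.
have Memb : forall nu f, m f -> exists n, M nu (f ^+ n).
  by move=> nu f mf; have [n Hn] := hE f mf 'X^nu; exists n.
have Mprim : forall nu, (0 < nu)%N -> is_primary_to m (M nu).
  move=> nu nu0; have hQ := Mid nu; split=> //; split; first exact: Mn1.
  split.
    move=> x y Mxy; case: (classic (m y)) => my.
      by right; apply: Memb.
    left; have [c Mc] := unit_mod hm hQ (Memb nu) my.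
    have -> : x = x * (1 - y * c) + c * (x * y) by ring.
    case: hQ => _ [QD QM]; apply: QD; [exact: QM | exact: QM].
  move=> a; split; first exact: Memb.
  move=> [n Qn]; apply: NNPP => na.
  have [c Mc] := unit_mod hm hQ (Memb nu) na.
  have := pow_one hQ Mc n.
  case: hQ => _ [QD QM] H; apply: (Mn1 nu nu0).
  have -> : 1 = (1 - (a * c) ^+ n) + c ^+ n * a ^+ n by rewrite exprMn; ring.
  by apply: QD => //; apply: QM.
have Miff : forall p : {poly A}, B p <-> forall nu, (0 < nu)%N -> M nu p`_nu.
  move=> p; split; first by move=> Bp nu _; exact: homog hB hC hG p Bp nu.
  exact: recon hB hC p.
split.
  exists M; split=> //; split=> // nu _ a Ha; apply: (Mdec 1%N nu a); rewrite addn1 //.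
move=> b Bb nu nu0; have [_ [_ [_ Hr]]] := Mprim nu nu0.
by apply/Hr; exists 1%N; rewrite expr1; exact: (proj1 (Miff b) Bb nu nu0).
Qed.
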